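(* Let $\mathcal P\subset\mathbb R^n$ be an $n$-dimensional convex polytope and consider $\dot x=Ax+a+Bu$, $x\in\mathcal P$, with $\operatorname{rank}(B)=n-1$, $(A,B)$ controllable and $\operatorname{int}\mathcal P\cap\mathcal O=\emptyset$. Let $y,z$ be distinct points of $\mathcal P$ and let $l$ be the line segment joining them. If $z,y\in\mathcal O$ and $y\in\mathcal B_z$, then $z\xrightarrow{l}y$.
   Context: $\mathcal B=\operatorname{Im}(B)$, $\mathcal O=\{x:Ax+a\in\mathcal B\}$; $\beta$ is the unit normal to $\mathcal B$ with $\beta^T(Ax+a)\le0$ on $\mathcal P$; $\mathcal B_z=\{x\in\mathbb R^n:\beta^Tx=\beta^Tz\}$. $z\xrightarrow{l}y$ means there exist a piecewise continuous control $u$ and $T\ge0$ such that the solution $\phi^u_t(z)$ satisfies $\phi^u_T(z)=y$ and $\phi^u_t(z)\in l$ for all $t\in[0,T]$. *)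

(* Defs.v *)
From HB Require Import structures.
From mathcomp Require Import all_boot all_order all_algebra.
From mathcomp Require Import all_classical all_reals all_analysis.
Set Implicit Arguments. Unset Strict Implicit. Unset Printing Implicit Defensive.
Import Order.TTheory GRing.Theory Num.Theory.
Import numFieldNormedType.Exports.
Local Open Scope classical_set_scope.
Local Open Scope ring_scope.

Section Defs.
Variables (R : realType) (n m : nat).

Definition conv_hull (k : nat) (v : 'I_k -> 'cV[R]_n) : set 'cV[R]_n :=
  [set x | exists w : 'I_k -> R,
     (forall i, 0 <= w i) /\ \sum_(i < k) w i = 1 /\ x = \sum_(i < k) w i *: v i].

(* an n-dimensional convex polytope: convex hull of finitely many points,
   with nonempty interior in R^n *)
Definition full_polytope (P : set 'cV[R]_n) : Prop :=
  (exists k (v : 'I_k -> 'cV[R]_n), P = conv_hull v) /\ interior P !=set0.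

Definition imB (B : 'M[R]_(n, m)) : set 'cV[R]_n :=
  [set x | exists v : 'cV[R]_m, x = B *m v].

Definition setO (A : 'M[R]_n) (a : 'cV[R]_n) (B : 'M[R]_(n, m)) : set 'cV[R]_n :=
  [set x | imB B (A *m x + a)].

(* Kalman rank condition: rank [B, AB, ..., A^(n-1) B] = n, stated as the
   rank of the sum of the row spaces of the transposed blocks *)
Definition controllable (A : 'M[R]_n) (B : 'M[R]_(n, m)) : Prop :=
  \rank (\sum_(i < n) <<(A ^+ i *m B)^T>>)%MS = n.

Definition segment (z y : 'cV[R]_n) : set 'cV[R]_n :=
  [set (1 - s) *: z + s *: y | s in `[0, 1]].

Definition hypB (beta z : 'cV[R]_n) : set 'cV[R]_n :=
  [set x | beta^T *m x = beta^T *m z].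

(* phi is the solution on [0,T] of  x' = A x + a + B u, x(0) = z, where u is
   piecewise continuous on [0,T]: there is a partition
   0 = t_0 <= t_1 <= ... <= t_k = T such that on each open piece (t_i,t_{i+1})
   u coincides with a function continuous on the closed piece [t_i,t_{i+1}];
   phi is continuous on [0,T] and satisfies the ODE on each open piece. *)
Definition is_solution (A : 'M[R]_n) (a : 'cV[R]_n) (B : 'M[R]_(n, m))
  (u : R -> 'cV[R]_m) (z : 'cV[R]_n) (T : R) (phi : R -> 'cV[R]_n) : Prop :=
  phi 0 = z /\ {within `[0, T], continuous phi} /\
  exists ts : seq R,
    let p := 0 :: rcons ts T in
    sorted <=%R p /\
    forall i : nat, (i < (size p).-1)%N ->
      let lo := nth 0 p i in let hi := nth 0 p i.+1 in
      (exists g : R -> 'cV[R]_m, {within `[lo, hi], continuous g} /\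
          forall t, lo < t < hi -> u t = g t) /\
      forall t, lo < t < hi -> is_derive t (1 : R) phi (A *m phi t + a + B *m u t).

Definition reaches_within (A : 'M[R]_n) (a : 'cV[R]_n) (B : 'M[R]_(n, m))
  (l : set 'cV[R]_n) (z y : 'cV[R]_n) : Prop :=
  exists (u : R -> 'cV[R]_m) (T : R) (phi : R -> 'cV[R]_n),
    0 <= T /\ is_solution A a B u z T phi /\ phi T = y /\
    forall t, 0 <= t <= T -> l (phi t).

End Defs.

(* Main.v *)
Require Import Defs.
From HB Require Import structures.
From mathcomp Require Import all_boot all_order all_algebra.
From mathcomp Require Import all_classical all_reals all_analysis.
Import Order.TTheory GRing.Theory Num.Theory.
Import numFieldNormedType.Exports.
Local Open Scope classical_set_scope.
Local Open Scope ring_scope.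
Lemma imB_lem (R : realType) (n m : nat) (B : 'M[R]_(n, m)) (beta d : 'cV[R]_n) :
  \rank B = n.-1 -> beta^T *m beta = 1%:M -> beta^T *m B = 0 ->
  beta^T *m d = 0 -> exists w : 'cV[R]_m, d = B *m w.
Proof.
move=> rB bb bB bd.
have b0 : beta != 0.
  apply/eqP=> b0; move: bb; rewrite b0 mulmx0 => /matrixP/(_ 0 0).
  rewrite !mxE /= => /esym/eqP; by rewrite oner_eq0.
have rb : \rank beta = 1%N.
  apply/eqP; rewrite eqn_leq rank_leq_col lt0n mxrank_eq0 b0 //.
have sBk : (B^T <= kermx beta)%MS.
  by apply/sub_kermxP; rewrite -[beta]trmxK -trmx_mul bB trmx0.
have sdk : (d^T <= kermx beta)%MS.
  by apply/sub_kermxP; rewrite -[beta]trmxK -trmx_mul bd trmx0.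
have eqk : (kermx beta <= B^T)%MS.
  have := mxrank_leqif_sup sBk; rewrite mxrank_ker rb mxrank_tr rB subn1 => -[_ <-].
  by [].
have /submxP[w hw] : (d^T <= B^T)%MS by apply: submx_trans eqk.
exists w^T; by rewrite -[d]trmxK hw trmx_mul trmxK.
Qed.
Lemma lin_der (R : realType) (V : normedModType R) (e c : V) (t : R) :
  is_derive t (1:R) (fun s : R => s *: e + c) e.
Proof.
have h : is_derive t (1:R) ( *:%R^~ e) e.
  apply: DeriveDef; first exact/diff_derivable.
  by rewrite deriveE // diff_val scale1r.
have := is_deriveD h (is_derive_cst c t 1); rewrite addr0.
move=> H; exact: H.
Qed.
Lemma lin_cont (R : realType) (V : normedModType R) (e c : V) (i : interval R) :
  {within [set` i], continuous (fun s : R => s *: e + c)}.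
Proof.
apply: derivable_within_continuous => x _.
by have [] := @lin_der R V e c x.
Qed.
Lemma alg (R : nzRingType) (V : lmodType R) (t : R) (p q r a : V) :
  t *: ((q - a) - (p - a)) + (p - a) + a + (t *: (p - q) + (r - p)) = r.
Proof.
have -> : q - a - (p - a) = q - p by rewrite opprB subrKA.
rewrite -[_ + _ + a]addrA subrK -[p - q]opprB scalerN.
rewrite -addrA addrCA.
by rewrite addNKr addrC subrK.
Qed.

Lemma key (R : comNzRingType) n m (A : 'M[R]_n) (B : 'M[R]_(n,m)) (a y z : 'cV[R]_n) (vy vz w : 'cV[R]_m) (t : R) :
 A *m y = B *m vy - a -> A *m z = B *m vz - a -> y - z = B *m w ->
 A *m (t *: (y - z) + z) + a + B *m (t *: (vz - vy) + (w - vz)) = y - z.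
Proof.
move=> Ay Az hw.
rewrite !(mulmxDr, mulmxN) -!scalemxAr !(mulmxDr, mulmxN) Ay Az [in RHS]hw.
exact: alg.
Qed.

Lemma seg_eq (R : comNzRingType) n (t : R) (z y : 'cV[R]_n) :
  (1 - t) *: z + t *: y = t *: (y - z) + z.
Proof. by rewrite scalerBl scale1r scalerBr -addrA addrC [- _ + _]addrC. Qed.

Theorem lemma3 (R : realType) (n m : nat) (P : set 'cV[R]_n)
  (A : 'M[R]_n) (a : 'cV[R]_n) (B : 'M[R]_(n, m)) (beta : 'cV[R]_n)
  (y z : 'cV[R]_n) :
  full_polytope P ->
  \rank B = n.-1 ->
  controllable A B ->
  interior P `&` setO A a B = set0 ->
  beta^T *m beta = 1%:M ->
  beta^T *m B = 0 ->
  (forall x, P x -> (beta^T *m (A *m x + a)) 0 0 <= 0) ->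
  P y -> P z -> y <> z ->
  setO A a B z -> setO A a B y -> hypB beta z y ->
  reaches_within A a B (segment z y) z y.
Proof.
move=> _ rB _ _ bb bB _ _ _ _ [vz hz] [vy hy] hyp.
have [w hw] : exists w, y - z = B *m w.
  apply: imB_lem rB bb bB _.
  by have := mulmxBr (beta^T) y z; rewrite -hyp subrr.
have Ay : A *m y = B *m vy - a by rewrite -hy addrK.
have Az : A *m z = B *m vz - a by rewrite -hz addrK.
exists (fun t => t *: (vz - vy) + (w - vz)), 1, (fun t => t *: (y - z) + z).
split; first exact: ler01.
split.
  split; first by rewrite scale0r add0r.
  split; first exact: lin_cont.
  exists [::]; split; first by rewrite /= ler01.
  move=> [|i] //= _; split.
    exists (fun t => t *: (vz - vy) + (w - vz)); split; first exact: lin_cont.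
    by [].
  move=> t _.
  rewrite (@key _ _ _ _ _ _ _ _ _ _ _ t Ay Az hw); exact: lin_der.
split; first by rewrite scale1r subrK.
move=> t /andP[t0 t1]; exists t.
  by rewrite /= in_itv /= t0 t1.
by rewrite seg_eq.
Qed.
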